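(* There exists $n_0$ such that for all positive integers $N$ and $k$ with $n := \binom{N}{k} \ge n_0$ and $k \le \sqrt[3]{\ln n}$, there exists a tournament $T$ on $N$ nodes whose auxiliary bipartite graph $G(T)$ is $k$-covered.
   Context: Let $T=(V,E)$ be a tournament on $N$ nodes and let $k \le N$ be a positive integer. The auxiliary bipartite digraph $G(T)$ has vertex set $R \cup C$, where $R$ contains one vertex for each node of $T$ and $C$ contains one vertex for each $k$-element subset of $V$. Its arcs are: for each $X = \{v_1,\dots,v_k\} \in C$, the arcs $(v_i, X)$ for $1 \le i \le k$; and for each $u \in R$ and $X \in C$, the arc $(X, u)$ if and only if $u$ dominates $X$ in $T$, i.e. $(u, v_i) \in E$ for all $v_i \in X$. A set of vertices $W = \{w_1,\dots,w_t\}$ of a digraph is covered if there is a vertex $y$ such that $(w_j, y)$ is an arc for all $1 \le j \le t$. A bipartite digraph is $k$-covered if every collection of $k$ vertices lying on the same side of the bipartition is covered. Here $\ln$ is the natural logarithm. *)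

(* Defs.v *)
From mathcomp Require Import all_boot.
From Stdlib Require Import Reals.
Set Implicit Arguments. Unset Strict Implicit. Unset Printing Implicit Defensive.

Definition tournament (N : nat) (E : rel 'I_N) : Prop :=
  (forall u, ~~ E u u) /\ (forall u v, u != v -> E u v = ~~ E v u).

Definition dominates (N : nat) (E : rel 'I_N) (u : 'I_N) (X : {set 'I_N}) : bool :=
  [forall x in X, E u x].

Definition kset (N k : nat) := {X : {set 'I_N} | #|X| == k}.

(* vertex set R + C of the auxiliary bipartite digraph G(T) *)
Definition Gvert (N k : nat) := ('I_N + kset N k)%type.

Definition is_R (N k : nat) (a : Gvert N k) : bool :=
  if a is inl _ then true else false.

Definition Garc (N k : nat) (E : rel 'I_N) (a b : Gvert N k) : bool :=
  match a, b with
  | inl v, inr X => v \in val X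
  | inr X, inl u => dominates E u (val X)
  | _, _ => false
  end.

Definition covered (V : finType) (arc : rel V) (W : {set V}) : Prop :=
  exists y, forall w, w \in W -> arc w y.

Definition k_covered (V : finType) (side : pred V) (arc : rel V) (k : nat) : Prop :=
  forall W : {set V}, #|W| = k ->
    (W \subset side) || (W \subset [predC side]) -> covered arc W.

Definition G_k_covered (N k : nat) (E : rel 'I_N) : Prop :=
  k_covered (@is_R N k) (@Garc N k E) k.

(* Main.v *)
Require Import Defs.
From mathcomp Require Import all_boot.
From Stdlib Require Import Reals Lra.
From mathcomp Require Import zify.
Notation "m ^ n" := (expn m n) : nat_scope.
Set Implicit Arguments. Unset Strict Implicit. Unset Printing Implicit Defensive.

Lemma INR_expn a n : INR (a ^ n) = (INR a ^ n)%R.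
Proof.
elim: n => [|n IH]; first by rewrite expn0.
by rewrite expnS mulnE mult_INR IH.
Qed.

Lemma INR_muln a b : INR (a * b) = (INR a * INR b)%R.
Proof. by rewrite mulnE mult_INR. Qed.

Lemma exp_nat K : exp (INR K) = (exp 1 ^ K)%R.
Proof.
elim: K => [|K IH]; first by rewrite /= exp_0.
by rewrite S_INR exp_plus IH /= Rmult_comm.
Qed.

Lemma exp_nat_mul K x : exp (INR K * x) = (exp x ^ K)%R.
Proof.
elim: K => [|K IH]; first by rewrite /= Rmult_0_l exp_0.
by rewrite S_INR Rmult_plus_distr_r Rmult_1_l exp_plus IH /= Rmult_comm.
Qed.

Lemma e_gt : (5/2 < exp 1)%R.
Proof.
have H1 : (1 + /6 < exp (/6))%R by apply: exp_ineq1; lra.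
have H2 : exp 1 = (exp (/6) ^ 6)%R.
  by rewrite -exp_nat_mul; congr exp; rewrite /=; field.
have H3 : ((1 + /6) ^ 6 <= exp (/6) ^ 6)%R by apply: pow_incr; lra.
rewrite H2; apply: Rlt_le_trans H3; simpl; lra.
Qed.

Lemma pow52 K : ((5/2) ^ K <= exp (INR K))%R.
Proof. rewrite exp_nat; apply: pow_incr; have := e_gt; lra. Qed.

Lemma real_part (n k : nat) : 2 <= n ->
  (INR k <= Rpower (ln (INR n)) (1/3))%R -> 5 ^ (k ^ 3) <= 2 ^ (k ^ 3) * n.
Proof.
move=> n2 Hk.
have Hn : (2 <= INR n)%R by apply: (le_INR 2 n); apply/leP.
have L0 : (0 < ln (INR n))%R by rewrite -ln_1; apply: ln_increasing; lra.
have P0 : (0 < Rpower (ln (INR n)) (1/3))%R by apply: exp_pos.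
have H3 : (INR (k ^ 3) <= ln (INR n))%R.
  rewrite INR_expn.
  have -> : ln (INR n) = (Rpower (ln (INR n)) (1/3) ^ 3)%R.
    rewrite -(Rpower_pow 3) // Rpower_mult.
    have -> : (1/3 * INR 3 = 1)%R by rewrite /=; field.
    by rewrite Rpower_1.
  apply: pow_incr; split => //; exact: pos_INR.
have H4 : ((5/2) ^ (k ^ 3) <= INR n)%R.
  apply: Rle_trans (pow52 _) _; rewrite -(exp_ln (INR n)); last lra.
  by case: (Rle_lt_or_eq_dec _ _ H3) => [/exp_increasing/Rlt_le|->]; [|apply: Rle_refl].
apply/leP; apply: INR_le; rewrite INR_muln !INR_expn.
have -> : INR 5 = (5/2 * INR 2)%R by rewrite /=; field.
rewrite Rpow_mult_distr Rmult_comm; apply: Rmult_le_compat_l => //.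
apply: pow_le; exact: pos_INR.
Qed.
Lemma ffact_le n m : n ^_ m <= n ^ m.
Proof.
elim: m => [|m IH]; first by [].
rewrite ffactnSr expnSr; apply: leq_mul => //; exact: leq_subr.
Qed.

Lemma bin_le_exp n m : 'C(n, m) <= n ^ m.
Proof.
apply: leq_trans (ffact_le n m); rewrite -bin_ffact.
by rewrite leq_pmulr ?fact_gt0.
Qed.

Lemma bern a n : a ^ n.+1 + n.+1 * a ^ n <= (a + 1) ^ n.+1.
Proof.
elim: n => [|n IH]; first by rewrite !expn1 expn0 muln1.
rewrite (expnS (a+1)); apply: leq_trans (leq_mul (leqnn (a+1)) IH).
rewrite !expnS; nia.
Qed.

Lemma half_bound a : 2 * a ^ a.+1 <= (a.+1) ^ a.+1.
Proof.
have := bern a a; rewrite addn1 => H; apply: leq_trans H.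
rewrite mul2n -addnn leq_add2l expnS; exact: leq_mul.
Qed.

Lemma poly_exp8 m : 0 < m -> 4 * m ^ 2 + 1 < 8 ^ m.
Proof.
elim: m => [//|m IH] _.
case: m IH => [|m] IH; first by [].
have := IH isT. rewrite (expnS 8 m.+1). move: (8 ^ m.+1) => x. nia.
Qed.


Definition dd m := 4 * m ^ 2 * 2 ^ m.

Lemma key1 m : 0 < m -> 'C(m + dd m, m) * (2 ^ m - 1) ^ dd m < 2 ^ (m * dd m).
Proof.
move=> m0; set q := 2 ^ m; set t := 4 * m ^ 2.
have q2 : 2 <= q by rewrite /q -{1}(expn1 2) leq_pexp2l.
have Hd : dd m = t * q by [].
have Hmq : m <= q by apply: ltnW; rewrite /q ltn_expl.
have HC : 'C(m + dd m, m) < 2 ^ t.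
  apply: leq_ltn_trans (bin_le_exp _ _) _.
  have H1 : m + dd m <= t.+1 * q by rewrite Hd mulSn leq_add2r.
  apply: (@leq_ltn_trans ((t.+1 * q) ^ m)); first by rewrite leq_exp2r.
  rewrite expnMn /q -expnM.
  have -> : 2 ^ t = 2 ^ (m*m) * ((2^3)^m)^m.
    by rewrite -!expnM -expnD /t; congr (2 ^ _); nia.
  rewrite mulnC ltn_pmul2l ?expn_gt0 // ltn_exp2r //.
  have -> : (2 ^ 3) = 8 by [].
  by rewrite /t -addn1; exact: poly_exp8.
have Ha : q = (q - 1).+1 by rewrite subn1 prednK // ltnW.
have Hpos : 0 < (q - 1) ^ dd m by rewrite expn_gt0 subn_gt0 q2.
apply: leq_trans (_ : 2 ^ t * (q - 1) ^ dd m <= _).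
  by rewrite ltn_pmul2r.
have := half_bound (q - 1); rewrite -Ha => Hh.
have : (2 * (q - 1) ^ q) ^ t <= (q ^ q) ^ t.
  have t0 : 0 < t by rewrite /t muln_gt0 expn_gt0 m0.
  by rewrite leq_exp2r.
rewrite expnMn -!expnM (mulnC q t) -Hd => H; apply: leq_trans H _.
by [].
Qed.

Lemma key2 m : 0 < m -> 'C(m + dd m, m) * (2 ^ (m + dd m)) ^ m * (2 ^ (m + dd m) - 2 ^ dd m) ^ dd m
   < (2 ^ (m + dd m)) ^ (m + dd m).
Proof.
move=> m0; have := key1 m0; set d := dd m => H.
have -> : 2 ^ (m + d) - 2 ^ d = 2 ^ d * (2 ^ m - 1) by rewrite mulnBr muln1 -expnD addnC.
rewrite expnMn -!expnM.
have -> : 2 ^ ((m + d) * (m + d)) = 2 ^ ((m + d) * m) * 2 ^ (d * d) * 2 ^ (m * d).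
  by rewrite -!expnD; congr (2 ^ _); nia.
rewrite (mulnC 'C(_,_)) -!mulnA ltn_pmul2l ?expn_gt0 //.
by rewrite mulnCA ltn_pmul2l ?expn_gt0 //.
Qed.
Lemma card_fam (aT rT : finType) (F : aT -> pred rT) :
  #|(finfun.family F : simpl_pred {ffun aT -> rT})| = \prod_x #|F x|.
Proof. by rewrite card_family foldrE big_image. Qed.

Lemma prod_if (M : nat) (S : {set 'I_M}) a b :
  \prod_(x : 'I_M) (if x \in S then a else b) = a ^ #|S| * b ^ (M - #|S|).
Proof.
rewrite (bigID (mem S)) /=.
rewrite [X in X * _](eq_bigr (fun=> a)); last by move=> x ->.
rewrite [X in _ * X](eq_bigr (fun=> b)); last by move=> x Hx; rewrite (negbTE Hx).
rewrite !prod_nat_const; congr (_ * _ ^ _).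
have := cardsC S; rewrite card_ord => H.
have E : #|[pred i | i \notin S]| = #|~: S| by apply: eq_card => x; rewrite !inE.
rewrite E; move: H; move: #|S| #|~: S| => p r; lia.
Qed.
Lemma union_bound (T I : finType) (P : pred I) (Q : I -> pred T) :
  (forall t, exists2 i, P i & Q i t) -> #|T| <= \sum_(i | P i) #|Q i|.
Proof.
move=> H.
have E : forall i, #|Q i| = \sum_t (Q i t : nat).
  move=> i; rewrite -sum1_card big_mkcond /=; apply: eq_bigr => t _.
  by have ->: (t \in Q i) = Q i t by []; case: (Q i t).
under eq_bigr do rewrite E.
rewrite exchange_big /= -sum1_card; apply: leq_sum => t _.
have [i Pi Qi] := H t.
by rewrite (bigD1 i) //= Qi.
Qed.

Section Count.
Variable M : nat.
Notation G := {ffun 'I_M -> {ffun 'I_M -> bool}}.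

Definition Edg (g : G) (u v : 'I_M) : bool :=
  if u < v then g u v else if v < u then ~~ g v u else false.

Definition cross (S : {set 'I_M}) (a b : 'I_M) :=
  ((a \notin S) && (b \in S) && (b < a)) || ((a \in S) && (b \notin S) && (a < b)).

Definition sigS (S : {set 'I_M}) (g : G) : G :=
  [ffun a => [ffun b => if cross S a b then ~~ g b a else g a b]].

Lemma cross_sym S a b : cross S a b = cross S b a.
Proof. by rewrite /cross; case: (a \in S); case: (b \in S); rewrite /= ?orbF. Qed.

Lemma sig_inv S : cancel (sigS S) (sigS S).
Proof.
move=> g; apply/ffunP => a; apply/ffunP => b; rewrite !ffunE.
case Hc: (cross S a b); last by [].
by rewrite cross_sym Hc negbK.
Qed.

Lemma Edg_sig (S : {set 'I_M}) (g : G) (v x : 'I_M) : v \notin S -> x \in S -> Edg g v x = sigS S g v x.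
Proof.
move=> vS xS; rewrite /Edg /sigS !ffunE /cross (negbTE vS) xS /=.
case: ltngtP => H.
- by [].
- by [].
- by move/val_inj: H => E; rewrite E xS in vS.
Qed.

Definition bad (g : G) (S : {set 'I_M}) :=
  [forall v, (v \notin S) ==> [exists x in S, ~~ Edg g v x]].

Definition Bad (S : {set 'I_M}) : {set G} :=
  [set h : G | [forall v, (v \notin S) ==> [exists x in S, ~~ h v x]]].

Lemma card_bad S : #|[set g | bad g S]| = #|Bad S|.
Proof.
rewrite -(card_preimset _ (can_inj (sig_inv S))); apply: eq_card => g.
rewrite !inE; apply: eq_forallb => v; case vS: (v \in S) => //=.
apply: eq_existsb => x; case xS: (x \in S) => //=.
by rewrite (@Edg_sig S) ?vS // sig_inv.
Qed.


Lemma card_allS (S : {set 'I_M}) :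
  #|[pred r : {ffun 'I_M -> bool} | [forall x in S, r x]]| = 2 ^ (M - #|S|).
Proof.
rewrite (eq_card (B := finfun.family (fun x : 'I_M => if x \in S then pred1 true else predT))).
  rewrite card_fam (eq_bigr (fun x : 'I_M => if x \in S then 1 else 2)).
    by rewrite prod_if exp1n mul1n.
  by move=> x _; case: (x \in S); rewrite ?card1 ?card_bool.
move=> r; rewrite !inE; apply/forallP/familyP => H x; have := H x;
  case: (x \in S) => //=; rewrite ?inE //.
all: by case: (r x).
Qed.

Lemma card_exS (S : {set 'I_M}) :
  #|[pred r : {ffun 'I_M -> bool} | [exists x in S, ~~ r x]]| = 2 ^ M - 2 ^ (M - #|S|).
Proof.
have := cardC [pred r : {ffun 'I_M -> bool} | [forall x in S, r x]].
rewrite card_ffun card_bool card_ord card_allS => H.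
have E : #|[pred r : {ffun 'I_M -> bool} | [exists x in S, ~~ r x]]| =
   #|[predC [pred r : {ffun 'I_M -> bool} | [forall x in S, r x]]]|.
  by apply: eq_card => r; rewrite !inE negb_forall_in.
by rewrite E -H addKn.
Qed.

Lemma card_BadS (S : {set 'I_M}) :
  #|Bad S| = (2 ^ M) ^ #|S| * (2 ^ M - 2 ^ (M - #|S|)) ^ (M - #|S|).
Proof.
rewrite (eq_card (B := finfun.family (fun v : 'I_M => if v \in S then predT
                          else [pred r : {ffun 'I_M -> bool} | [exists x in S, ~~ r x]]))).
  rewrite card_fam (eq_bigr (fun x : 'I_M => if x \in S then 2 ^ M else 2 ^ M - 2 ^ (M - #|S|))).
    by rewrite prod_if.
  move=> x _; case: (x \in S); last by rewrite card_exS.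
  by rewrite (eq_card (B := {ffun 'I_M -> bool})) // card_ffun card_bool card_ord.
move=> h; rewrite !inE; apply/forallP/familyP => H x; have := H x;
  case: (x \in S) => //=; by rewrite ?inE.
Qed.

End Count.

Lemma exists_good M m : m <= M ->
  'C(M, m) * (2 ^ M) ^ m * (2 ^ M - 2 ^ (M - m)) ^ (M - m) < (2 ^ M) ^ M ->
  exists g : {ffun 'I_M -> {ffun 'I_M -> bool}},
    forall S : {set 'I_M}, #|S| = m -> exists v, forall x, x \in S -> Edg g v x.
Proof.
move=> mM Hlt.
case: (boolP [exists g : {ffun 'I_M -> {ffun 'I_M -> bool}},
                 [forall S : {set 'I_M}, (#|S| == m) ==> ~~ bad g S]]).
  move=> /existsP [g /forallP Hg]; exists g => S HS.
  have := Hg S; rewrite HS eqxx /= /bad negb_forall => /existsP [v].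
  rewrite negb_imply negb_exists_in => /andP [_ /forall_inP Hv].
  by exists v => x /Hv; rewrite negbK.
rewrite negb_exists => /forallP Hall.
have Hub : #|{ffun 'I_M -> {ffun 'I_M -> bool}}| <=
   \sum_(S : {set 'I_M} | #|S| == m) #|[pred g | bad g S]|.
  apply: union_bound => g; have := Hall g; rewrite negb_forall => /existsP [S].
  by rewrite negb_imply negbK => /andP [HS Hb]; exists S.
have E : \sum_(S : {set 'I_M} | #|S| == m) #|[pred g | bad g S]| =
   'C(M, m) * ((2 ^ M) ^ m * (2 ^ M - 2 ^ (M - m)) ^ (M - m)).
  rewrite (eq_bigr (fun=> (2 ^ M) ^ m * (2 ^ M - 2 ^ (M - m)) ^ (M - m))).
    rewrite -(card_ord M) -card_draws -sum_nat_const card_ord.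
    by apply: eq_bigl => S; rewrite inE.
  move=> S /eqP HS.
  have -> : #|[pred g | bad g S]| = #|[set g | bad g S]| by apply: eq_card => g; rewrite !inE.
  by rewrite card_bad card_BadS HS.
move: Hub; rewrite E card_ffun card_ffun card_bool card_ord mulnA => H.
by have := leq_ltn_trans H Hlt; rewrite ltnn.
Qed.

Lemma extend_set (T : finType) (A : {set T}) m :
  #|A| <= m -> m <= #|T| -> exists B : {set T}, A \subset B /\ #|B| = m.
Proof.
elim: m => [|m IH] HA HT.
  by exists A; split => //; apply/eqP; rewrite -leqn0.
case: (ltngtP #|A| m.+1) => [Hlt|Hgt|Heq]; last by exists A.
  2: by have := leq_trans Hgt HA; rewrite ltnn.
have [B [AB HB]] := IH Hlt (ltnW HT).
have : 0 < #|~: B| by have := cardsC B; lia.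
case/card_gt0P => x; rewrite inE => xB.
exists (x |: B); split; first by apply: subset_trans AB (subsetUr _ _).
by rewrite cardsU1 xB HB add1n.
Qed.

Lemma card_bigcup_le (I T : finType) (A : {pred I}) (F : I -> {set T}) :
  #|\bigcup_(i in A) F i| <= \sum_(i in A) #|F i|.
Proof.
elim/big_rec2: _ => [|i U n _ H]; first by rewrite cards0.
apply: leq_trans (leq_card_setU _ _) _.
by rewrite leq_add2l.
Qed.

Lemma Edg_irr M (g : {ffun 'I_M -> {ffun 'I_M -> bool}}) a : ~~ Edg g a a.
Proof. by rewrite /Edg ltnn. Qed.

Lemma Edg_anti M (g : {ffun 'I_M -> {ffun 'I_M -> bool}}) a b :
  a != b -> Edg g a b = ~~ Edg g b a.
Proof.
move=> ab; rewrite /Edg; case: ltngtP => H; rewrite ?negbK //.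
by move/val_inj: H => E; rewrite E eqxx in ab.
Qed.

Section Ext.
Variables (M N : nat) (HMN : M <= N) (g : {ffun 'I_M -> {ffun 'I_M -> bool}}).

Definition ocast (u : 'I_N) : option 'I_M := insub (val u).

Definition EN (u v : 'I_N) : bool :=
  match ocast u, ocast v with
  | Some a, Some b => Edg g a b
  | Some _, None => true
  | None, Some _ => false
  | None, None => u < v
  end.

Lemma ocastP u a : ocast u = Some a -> val a = val u.
Proof. by rewrite /ocast; case: insubP => [b _ Hb [<-] | _ //]. Qed.

Lemma ocast_widen a : ocast (widen_ord HMN a) = Some a.
Proof. by rewrite /ocast /=; exact: valK. Qed.

Lemma EN_tournament : tournament EN.
Proof.
split.
  by move=> u; rewrite /EN; case: (ocast u) => [a|]; rewrite ?Edg_irr ?ltnn.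
move=> u v uv; rewrite /EN.
case Hu: (ocast u) => [a|]; case Hv: (ocast v) => [b|] //.
  apply: Edg_anti; apply/negP => /eqP ab; move: uv; rewrite -ab in Hv.
  have E1 := ocastP Hu; have E2 := ocastP Hv.
  have -> : u = v by apply: val_inj; rewrite -E1 -E2.
  by move/eqP.
case: ltngtP => H //.
by move/val_inj: H => E; rewrite E eqxx in uv.
Qed.

Lemma EN_dom m : m <= M ->
  (forall S : {set 'I_M}, #|S| = m -> exists v, forall x, x \in S -> Edg g v x) ->
  forall S : {set 'I_N}, #|S| <= m -> exists v, forall x, x \in S -> EN v x.
Proof.
move=> mM Hg S HS.
set S' := [set a : 'I_M | widen_ord HMN a \in S].
have winj : injective (widen_ord HMN).
  by move=> a b /(congr1 val) /= /val_inj.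
have HS' : #|S'| <= m.
  apply: leq_trans HS; rewrite -(card_imset _ winj); apply: subset_leq_card.
  by apply/subsetP => x /imsetP [a]; rewrite inE => Ha ->.
have HmT : m <= #|'I_M| by rewrite card_ord.
have [S'' [sub HS'']] := extend_set HS' HmT.
have [v Hv] := Hg S'' HS''.
exists (widen_ord HMN v) => x xS; rewrite /EN ocast_widen.
case Hx: (ocast x) => [a|] //.
apply: Hv; apply: (subsetP sub); rewrite inE.
have -> : widen_ord HMN a = x by apply: val_inj; rewrite /= (ocastP Hx).
exact: xS.
Qed.

End Ext.

Lemma cover_ok N k (E : rel 'I_N) :
  (forall S : {set 'I_N}, #|S| <= k * k -> exists v, forall x, x \in S -> E v x) ->
  G_k_covered k E.
Proof.
move=> Hd W HW /orP [HR|HC].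
- set X := [set x : 'I_N | (inl x : Gvert N k) \in W].
  have E1 : inl @: X = W.
    apply/setP => [[x|Y]].
      by rewrite mem_imset ?inE //; move=> a b [].
    apply/idP/idP.
      by case/imsetP.
    by move=> HY; have := subsetP HR _ HY.
  have HX : #|X| == k by rewrite -HW -E1 card_imset //; move=> a b [].
  exists (inr (exist _ X HX)) => w Hw.
  case: w Hw => [x|Y] Hw; last by have := subsetP HR _ Hw.
  by rewrite /= inE.
- set f := fun w : Gvert N k => match w with inr X => val X | inl _ => set0 end.
  set S := \bigcup_(w in W) f w.
  have HS : #|S| <= k * k.
    apply: leq_trans (card_bigcup_le _ _) _.
    apply: (@leq_trans (\sum_(w in W) k)); last by rewrite sum_nat_const HW.
    apply: leq_sum => w Hw.
    case: w Hw => [x|Y] Hw; first by rewrite cards0.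
    by rewrite /f (eqP (valP Y)).
  have [v Hv] := Hd S HS.
  exists (inl v) => w Hw.
  case: w Hw => [x|Y] Hw; first by have := subsetP HC _ Hw.
  rewrite /= /dominates; apply/forall_inP => x Hx; apply: Hv.
  by apply/bigcupP; exists (inr Y).
Qed.

Lemma Qlem m : 40 <= m -> (4 * m ^ 2 + 1) * 4 ^ m <= 5 ^ m.
Proof.
elim: m => [//|m IH] H.
case: (ltngtP m 39) => Hm.
- lia.
- have {}IH := IH Hm.
  rewrite (expnS 4) (expnS 5).
  apply: (@leq_trans (5 * ((4 * m ^ 2 + 1) * 4 ^ m))); last by rewrite leq_mul2l IH orbT.
  move: (4 ^ m) => x. nia.
- rewrite Hm.
  have B0 : 3 * 4 ^ 5 <= 5 ^ 5 by [].
  have B4 : (3 * 4 ^ 5) ^ 8 <= (5 ^ 5) ^ 8 by rewrite leq_exp2r.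
  rewrite expnMn -!expnM in B4.
  have -> : 4 * 39.+1 ^ 2 + 1 = 6401 by [].
  have E9 : 3 ^ 8 = 6561 by [].
  apply: leq_trans B4; rewrite E9 leq_mul2r; apply/orP; right; by [].
Qed.

Definition Mof k := k * k + dd (k * k).

Lemma Mbound m : 40 <= m -> (m + dd m) * 2 ^ m <= 5 ^ m.
Proof.
move=> H; apply: leq_trans (Qlem H); rewrite /dd.
have E : 4 ^ m = 2 ^ m * 2 ^ m by rewrite -expnMn.
have Hm : m <= 2 ^ m by apply: ltnW; rewrite ltn_expl.
rewrite E mulnDl mulnDl mul1n -mulnA; rewrite addnC leq_add2l.
by rewrite leq_mul2r Hm orbT.
Qed.

Lemma dd_mono a b : a <= b -> dd a <= dd b.
Proof.
move=> ab; rewrite /dd; apply: leq_mul; first by rewrite leq_mul2l leq_exp2r // ab orbT.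
by rewrite leq_pexp2l.
Qed.

Definition n0 := Mof 6 ^ 6.

Lemma M_le_N N k : 0 < N -> 0 < k -> n0 <= 'C(N, k) ->
  (INR k <= Rpower (ln (INR 'C(N, k))) (1 / 3))%R -> Mof k <= N.
Proof.
move=> N0 k0 Hn Hr.
have CN : 'C(N, k) <= N ^ k by apply: bin_le_exp.
case: (leqP k 6) => Hk.
- have H1 : Mof 6 ^ 6 <= N ^ 6.
    apply: leq_trans Hn (leq_trans CN _); by rewrite leq_pexp2l.
  rewrite leq_exp2r // in H1.
  apply: leq_trans H1; rewrite /Mof; have kk : k * k <= 6 * 6 by apply: leq_mul.
  by apply: leq_add => //; apply: dd_mono.
- have M6 : 2 <= Mof 6 by rewrite /Mof; apply: leq_trans (leq_addr _ _).
  have n2 : 2 <= 'C(N, k).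
    apply: leq_trans Hn; rewrite /n0; apply: leq_trans M6 _.
    by rewrite -{1}(expn1 (Mof 6)) leq_pexp2l // ltnW.
  have R := real_part n2 Hr.
  set m := k * k.
  have E3 : k ^ 3 = m * k by rewrite /m !expnS expn0 muln1 mulnA.
  rewrite E3 in R.
  have R2 : (5 ^ m) ^ k <= (2 ^ m * N) ^ k.
    rewrite -expnM expnMn -expnM; apply: leq_trans R _; by rewrite leq_mul2l CN orbT.
  rewrite leq_exp2r // in R2.
  have m40 : 40 <= m by rewrite /m; apply: (@leq_trans (7 * 7)) => //; exact: leq_mul.
  have := leq_trans (Mbound m40) R2.
  by rewrite mulnC leq_pmul2l ?expn_gt0.
Qed.

Theorem lemma1 :
  exists n0 : nat, forall N k : nat, 0 < N -> 0 < k -> k <= N ->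
    n0 <= 'C(N, k) ->
    (INR k <= Rpower (ln (INR 'C(N, k))) (1 / 3))%R ->
    exists E : rel 'I_N, tournament E /\ @G_k_covered N k E.
Proof.
exists n0 => N k N0 k0 kN Hn Hr.
have HM := M_le_N N0 k0 Hn Hr.
set m := k * k.
have m0 : 0 < m by rewrite /m muln_gt0 k0.
have Hlt := key2 m0.
have mM : m <= m + dd m by apply: leq_addr.
have Hlt' : 'C(m + dd m, m) * (2 ^ (m + dd m)) ^ m * (2 ^ (m + dd m) - 2 ^ (m + dd m - m)) ^ (m + dd m - m) < (2 ^ (m + dd m)) ^ (m + dd m) by rewrite addKn.
have [g Hg] := @exists_good (m + dd m) m mM Hlt'.
exists (@EN (m + dd m) N g); split; first exact: EN_tournament.
apply: cover_ok; exact: (@EN_dom (m + dd m) N HM g m mM Hg).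
Qed.
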